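(* Let $N\ge 2$, $1\le Q<N$, $P\in\mathbb{C}^{N\times Q}$, let $x=(x_1,\dots,x_N)^T\in\mathbb{C}^N$ with $x_2,\dots,x_{Q+1}$ nonzero, $X=\mathrm{diag}(x)$, and let $S\in\mathbb{C}^{Q\times Q}$ be invertible with entries $S_{mq}$. Let $\mathcal{J}=\{1,\dots,N\}\cup\bigcup_{m=2}^{Q}\{(m-1)N+1,\dots,(m-1)N+Q+1\}$ and let $\tilde P=P_{\{1,\dots,Q+1\},:}$. Then $$\Big|\det\big[\,[I_Q\otimes XP]_{\mathcal{J},:}\ \ [(S\otimes I_N)D(P)]_{\mathcal{J},\{2,\dots,N\}}\,\big]\Big| =\prod_{j=Q+2}^{N}\Big|\sum_{q=1}^{Q}S_{1q}P_{jq}\Big|\ \prod_{k=1}^{5}|\det M_k|,$$ where $\tilde X=\mathrm{diag}(x_1,\dots,x_{Q+1})$ and $M_1=I_Q\otimes\tilde X$, $M_2=S\otimes I_{Q+1}$, $M_3=\big[\,I_Q\otimes\tilde P\ \ [D(\tilde P)]_{:,\{2,\dots,Q+1\}}\,\big]$, $M_4=\begin{bmatrix}S^{-1}\otimes I_Q&0\\0&I_Q\end{bmatrix}$, $M_5=\begin{bmatrix}I_{Q^2}&0\\0&\mathrm{diag}(x_2,\dots,x_{Q+1})^{-1}\end{bmatrix}$.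
   Context: For a $K\times L$ matrix $B$ with entries $b_{ij}$, $D(B)$ denotes the $KL\times K$ matrix obtained by stacking vertically $\mathrm{diag}(b_{11},\dots,b_{K1}),\dots,\mathrm{diag}(b_{1L},\dots,b_{KL})$. For a matrix $B$ and index sets $\mathcal{I},\mathcal{S}$, $[B]_{\mathcal{I},\mathcal{S}}$ is the submatrix with rows in $\mathcal{I}$ and columns in $\mathcal{S}$; '':'' means all rows/columns. $\otimes$ is the Kronecker product, with ordinary matrix products taking precedence over it (e.g. $I_Q\otimes XP=I_Q\otimes(XP)$). The matrix on the left is square of size $N-1+Q^2$. *)

(* Defs.v *)
From HB Require Import structures.
From mathcomp Require Import all_boot all_order all_algebra.
Set Implicit Arguments. Unset Strict Implicit. Unset Printing Implicit Defensive.
Import Order.TTheory GRing.Theory Num.Theory.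
Local Open Scope ring_scope.

Section Defs.
Variable R : pzRingType.

(* entry (i,j) of A, 0-based nat indices, 0 if out of range *)
Definition mget m n (A : 'M[R]_(m, n)) (i j : nat) : R :=
  oapp (fun i' : 'I_m => oapp (fun j' : 'I_n => A i' j') 0 (insub j)) 0 (insub i).

Definition kron m n p q (A : 'M[R]_(m, n)) (B : 'M[R]_(p, q)) : 'M[R]_(m * p, n * q) :=
  \matrix_(i, j) (mget A (i %/ p)%N (j %/ q)%N * mget B (i %% p)%N (j %% q)%N).

(* D(B) for B : K x L : stack vertically diag(b_{1l},...,b_{Kl}), l = 1..L *)
Definition Dmx K L (B : 'M[R]_(K, L)) : 'M[R]_(L * K, K) :=
  \matrix_(r, c) (if ((r %% K)%N == c :> nat) then mget B (r %% K)%N (r %/ K)%N else 0).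

Definition rowsel m n p (f : nat -> nat) (A : 'M[R]_(m, n)) : 'M[R]_(p, n) :=
  \matrix_(i, j) mget A (f i) j.

End Defs.

Lemma shift1_proof (n : nat) (j : 'I_n.-1) : (j.+1 < n)%N.
Proof. by case: n j => [[]|n] //= [j Hj]. Qed.

(* j |-> j+1 : indexes columns {2,...,n} (1-based) of an n-column matrix *)
Definition shift1 (n : nat) (j : 'I_n.-1) : 'I_n := Ordinal (shift1_proof j).

(* 0-based enumeration (increasing) of the index set
   J = {1..N} U U_{m=2}^Q {(m-1)N+1, ..., (m-1)N+Q+1}  (1-based) *)
Definition Jidx (N Q : nat) (r : nat) : nat :=
  if (r < N)%N then r
  else let t := (r - N)%N in ((t %/ Q.+1).+1 * N + t %% Q.+1)%N.

Arguments rowsel {R m n p} f A.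
Arguments kron {R m n p q} A B.
Arguments Dmx {R K L} B.
Arguments mget {R m n} A i j.

(* Main.v *)
Require Import Defs.
From HB Require Import structures.
From mathcomp Require Import all_boot all_order all_algebra all_fingroup.
From Stdlib Require Import Lia.
Import Order.TTheory GRing.Theory Num.Theory.
Local Open Scope ring_scope.


Lemma mget_ord {R : pzRingType} {m n} (A : 'M[R]_(m, n)) {i j} (hi : (i < m)%N) (hj : (j < n)%N) :
  mget A i j = A (Ordinal hi) (Ordinal hj).
Proof. by rewrite /mget (@insubT _ (fun k => (k < m)%N) 'I_m i hi) /= (@insubT _ (fun k => (k < n)%N) 'I_n j hj). Qed.

Lemma mgetE (R : pzRingType) m n (A : 'M[R]_(m, n)) (i : 'I_m) (j : 'I_n) :
  mget A i j = A i j.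
Proof. by rewrite /mget !valK. Qed.

Lemma mget1 {R : pzRingType} {n i j} (hi : (i < n)%N) (hj : (j < n)%N) :
  mget (1%:M : 'M[R]_n) i j = (i == j)%:R.
Proof. by rewrite (mget_ord _ hi hj) mxE. Qed.

Lemma sum_divmod (R : nmodType) n q (f : nat -> nat -> R) :
  \sum_(k < n * q) f (k %/ q)%N (k %% q)%N = \sum_(a < n) \sum_(b < q) f a b.
Proof.
case: q => [|q].
  by rewrite muln0 big_ord0 big1 // => a _; rewrite big_ord0.
elim: n => [|n IH]; first by rewrite mul0n !big_ord0.
rewrite [RHS]big_ord_recr /= -IH.
rewrite -(big_mkord xpredT (fun k => f (k %/ q.+1)%N (k %% q.+1)%N)).
rewrite -(big_mkord xpredT (fun k => f (k %/ q.+1)%N (k %% q.+1)%N)).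
rewrite mulSnr (big_cat_nat _ (leq_addr _ _)) //=; congr (_ + _).
rewrite -{1}[(n * q.+1)%N]add0n big_addn addKn big_mkord; apply: eq_bigr => i _.
rewrite (addnC i) divnMDl // modnMDl divn_small // addn0 modn_small //.
Qed.

Lemma kron_mul (R : comPzRingType) m n p q r s (A : 'M[R]_(m, n)) (B : 'M[R]_(p, q))
  (C : 'M[R]_(n, r)) (D : 'M[R]_(q, s)) :
  kron A B *m kron C D = kron (A *m C) (B *m D).
Proof.
apply/matrixP => i j; rewrite !mxE.
have hp : (0 < p)%N by case: p {B D} i => [|//] [i]; rewrite muln0.
have hs : (0 < s)%N by case: s {D} j => [|//] [j]; rewrite muln0.
have hi1 : (i %/ p < m)%N by rewrite ltn_divLR.
have hi2 : (i %% p < p)%N by rewrite ltn_mod.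
have hj1 : (j %/ s < r)%N by rewrite ltn_divLR.
have hj2 : (j %% s < s)%N by rewrite ltn_mod.
under eq_bigr do rewrite !mxE.
rewrite (@sum_divmod _ _ _ (fun a b => mget A (i %/ p) a * mget B (i %% p) b * (mget C a (j %/ s) * mget D b (j %% s)))).
rewrite (mget_ord _ hi1 hj1) (mget_ord _ hi2 hj2) !mxE big_distrl /=.
apply: eq_bigr => a _; rewrite big_distrr /=; apply: eq_bigr => b _.
rewrite (mget_ord A hi1 (ltn_ord a)) (mget_ord B hi2 (ltn_ord b)).
rewrite (mget_ord C (ltn_ord a) hj1) (mget_ord D (ltn_ord b) hj2).
have ea : Ordinal (ltn_ord a) = a by apply/val_inj.
have eb : Ordinal (ltn_ord b) = b by apply/val_inj.
by rewrite ea eb mulrACA.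
Qed.


Lemma kronSD (R : comPzRingType) Q M (S : 'M[R]_Q) (P : 'M[R]_(M, Q)) (i : 'I_(Q * M)) (c : 'I_M) :
  (kron S (1%:M : 'M[R]_M) *m Dmx P) i c =
  if ((i %% M)%N == c :> nat) then \sum_(q < Q) mget S (i %/ M)%N q * mget P (i %% M)%N q else 0.
Proof.

have hi2 : (i %% M < M)%N by rewrite ltn_mod; case: (M) c => [[]|].
rewrite !mxE.
under eq_bigr do rewrite !mxE.
rewrite (@sum_divmod _ _ _ (fun a b => mget S (i %/ M) a * mget 1%:M (i %% M) b *
   (if (b == c)%N then mget P b a else 0))).
rewrite (eq_bigr (fun a : 'I_Q => mget S (i%/M) a * mget (1%:M : 'M[R]_M) (i%%M) c * mget P c a)); last first.
  move=> a _; rewrite (bigD1 c) //= eqxx big1 ?addr0 // => b hb.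
  by rewrite ifN ?mulr0.
case: eqP => [e|ne].
  apply: eq_bigr => a _; rewrite (mget1 hi2 (ltn_ord c)) e eqxx mulr1.
  by []. 
rewrite big1 // => a _; rewrite (mget1 hi2 (ltn_ord c)).
by move/eqP/negPf: ne => ->; rewrite mulr0 mul0r.
Qed.

Lemma det_castmx (R : comPzRingType) n m (e : n = m) (A : 'M[R]_n) :
  \det (castmx (e, e) A) = \det A.
Proof. by case: m / e; rewrite castmx_id. Qed.

Lemma castmx_mulmx (R : pzRingType) n n' p (e : n = n') (A : 'M[R]_n) (B : 'M[R]_(n, p)) :
  castmx (e, e) A *m castmx (e, erefl) B = castmx (e, erefl) (A *m B).
Proof. by case: n' / e; rewrite !castmx_id. Qed.

Lemma castmx_mull (R : pzRingType) n n' p q (e : n = n') (A : 'M[R]_(n, p)) (B : 'M[R]_(p, q)) :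
  castmx (e, erefl) A *m B = castmx (e, erefl) (A *m B).
Proof. by case: n' / e; rewrite !castmx_id. Qed.


Lemma mget_kron (R : pzRingType) m n p q (A : 'M[R]_(m, n)) (B : 'M[R]_(p, q)) r c :
  (r < m * p)%N -> (c < n * q)%N ->
  mget (kron A B) r c = mget A (r %/ p)%N (c %/ q)%N * mget B (r %% p)%N (c %% q)%N.
Proof. by move=> hr hc; rewrite (mget_ord _ hr hc) mxE. Qed.

Lemma mget_colsub1 (R : pzRingType) m M (Y : 'M[R]_(m, M)) r c :
  (c < M.-1)%N -> mget (colsub (@shift1 M) Y) r c = mget Y r c.+1.
Proof.
move=> hc; rewrite /mget; case: (@insub _ _ 'I_m r) => [r'|] //=.
rewrite (@insubT _ (fun k => (k < M.-1)%N) 'I_M.-1 c hc) /= mxE.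
by rewrite (@insubT _ (fun k => (k < M)%N) 'I_M c.+1 (shift1_proof (Ordinal hc))).
Qed.

Lemma mget_rowsel (R : pzRingType) m n p f (A : 'M[R]_(m, n)) a b :
  (a < p)%N -> mget (rowsel (p := p) f A) a b = mget A (f a) b.
Proof.
move=> ha; rewrite {1}/mget (@insubT _ (fun k => (k < p)%N) 'I_p a ha) /=.
case: insubP => [b' _ hb|hb] /=; first by rewrite mxE hb.
rewrite /mget; case: (@insub _ _ 'I_m (f a)) => [a'|] //=.
by rewrite insubN.
Qed.


Ltac tonat := repeat match goal with
 | H : is_true (_ < _)%N |- _ => apply (elimT ssrnat.ltP) in H
 | H : is_true (_ <= _)%N |- _ => apply (elimT ssrnat.leP) in H
 | H : (_ < _)%N = true |- _ => apply (elimT ssrnat.ltP) in H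
 | H : (_ <= _)%N = true |- _ => apply (elimT ssrnat.leP) in H
 | H : (_ < _)%N = false |- _ => apply negbT in H; rewrite -leqNgt in H
 | H : (_ <= _)%N = false |- _ => apply negbT in H; rewrite -ltnNge in H
 | |- is_true (_ < _)%N => apply/ssrnat.ltP
 | |- is_true (_ <= _)%N => apply/ssrnat.leP
 end;
 repeat match goal with
 | H : context [addn] |- _ => rewrite -plusE in H
 | H : context [subn] |- _ => rewrite -minusE in H
 | H : context [muln] |- _ => rewrite -multE in H
 end; rewrite -?plusE -?minusE -?multE.

Theorem mainTheorem5 (C : numClosedFieldType) (N Q : nat)
  (HN : (2 <= N)%N) (HQ1 : (1 <= Q)%N) (HQN : (Q < N)%N)
  (P : 'M[C]_(N, Q)) (x : 'cV[C]_N)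
  (hx : forall i : 'I_N, (1 <= i <= Q)%N -> x i 0 != 0)
  (S : 'M[C]_Q) (hS : S \in unitmx) :
  let X := diag_mx x^T in
  let A : 'M[C]_(Q * Q + N.-1) :=
    row_mx (rowsel (Jidx N Q) (kron (1%:M : 'M[C]_Q) (X *m P)))
           (rowsel (Jidx N Q)
              (colsub (@shift1 N) (kron S (1%:M : 'M[C]_N) *m Dmx P))) in
  let Pt : 'M[C]_(Q.+1, Q) := rowsel id P in
  let Xt : 'M[C]_Q.+1 := diag_mx (\row_(i < Q.+1) mget x i 0) in
  let M1 := kron (1%:M : 'M[C]_Q) Xt in
  let M2 := kron S (1%:M : 'M[C]_Q.+1) in
  let M3 : 'M[C]_(Q * Q + Q) :=
    castmx (mulnSr Q Q, erefl)
      (row_mx (kron (1%:M : 'M[C]_Q) Pt) (colsub (@shift1 Q.+1) (Dmx Pt))) in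
  let M4 : 'M[C]_(Q * Q + Q) :=
    block_mx (kron (invmx S) (1%:M : 'M[C]_Q)) 0 0 (1%:M : 'M[C]_Q) in
  let M5 : 'M[C]_(Q * Q + Q) :=
    block_mx (1%:M : 'M[C]_(Q * Q)) 0 0
      (invmx (diag_mx (\row_(i < Q) mget x i.+1 0))) in
  `|\det A| =
    (\prod_(Q.+1 <= j < N) `|\sum_(q < Q) mget S 0 q * mget P j q|)
    * (`|\det M1| * `|\det M2| * `|\det M3| * `|\det M4| * `|\det M5|).
Proof.
move=> X A Pt Xt M1 M2 M3 M4 M5.
have eN : (Q * Q + N.-1 = (Q * Q + Q) + (N - Q.+1))%N.
 by tonat; lia.
pose sg := fun r : nat => if (r < Q * Q + Q)%N then (if (r < Q.+1)%N then r else (N + (r - Q.+1))%N)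
   else (r - (Q * Q + Q) + Q.+1)%N.
have sg_lt : forall r, (r < Q * Q + N.-1)%N -> (sg r < Q * Q + N.-1)%N.
  move=> r hr; rewrite /sg; case: ifP => h1; first case: ifP => h2; tonat; lia.
have sg_inj : forall r r', (r < Q * Q + N.-1)%N -> (r' < Q * Q + N.-1)%N -> sg r = sg r' -> r = r'.
  move=> r r' hr hr'; rewrite /sg.
  case: ifP => h1; [case: ifP => h2|]; (case: ifP => h3; [case: ifP => h4|]); tonat; lia.
pose sig := fun y : 'I_(Q * Q + N.-1) => insubd y (sg y).
have sigval : forall y, val (sig y) = sg y by move=> y; rewrite val_insubd sg_lt.
have siginj : injective sig.
  by move=> y z /(congr1 val); rewrite !sigval => /sg_inj e; apply/val_inj/e.
pose s := perm siginj.
have detA : `|\det A| = `|\det (row_perm s A)|.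
  by rewrite row_permE det_mulmx det_perm normrM normrX normrN1 expr1n mul1r.
pose AA := castmx (eN, eN) (row_perm s A).
have AAE : forall i j, AA i j = A (sig (cast_ord (esym eN) i)) (cast_ord (esym eN) j).
  by move=> i j; rewrite castmxE mxE permE.
have Aentry : forall (r c : 'I_(Q * Q + N.-1)), A r c =
   if (c < Q * Q)%N then mget (kron (1%:M : 'M[C]_Q) (X *m P)) (Jidx N Q r) c
   else mget (kron S (1%:M : 'M[C]_N) *m Dmx P) (Jidx N Q r) (c - Q * Q).+1.
  move=> r c; rewrite mxE; case: splitP => [c' hc|c' hc]; rewrite mxE hc.
    by [].
  rewrite addKn mget_colsub1 //.
have Jrm : forall i, (i < Q * Q + Q)%N -> Jidx N Q (sg i) = (i %/ Q.+1 * N + i %% Q.+1)%N.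
  move=> i hi; rewrite /sg hi /Jidx; case: (ltnP i Q.+1) => h2.
    by rewrite (leq_trans h2 HQN) divn_small // modn_small // mul0n add0n.
  have -> : (N + (i - Q.+1) < N)%N = false by rewrite ltnNge leq_addr.
  rewrite addKn.
  have ei : i = (1 * Q.+1 + (i - Q.+1))%N by rewrite mul1n subnKC.
  by rewrite {3 4}ei divnMDl // modnMDl add1n.
have rmf : forall i, (i < Q * Q + Q)%N -> [/\ (i %/ Q.+1 * N + i %% Q.+1 < Q * N)%N,
   ((i %/ Q.+1 * N + i %% Q.+1) %/ N = i %/ Q.+1)%N, ((i %/ Q.+1 * N + i %% Q.+1) %% N = i %% Q.+1)%N,
   (i %/ Q.+1 < Q)%N & (i %% Q.+1 < Q.+1)%N].
  move=> i hi.
  have hd : (i %/ Q.+1 < Q)%N by rewrite ltn_divLR // mulnSr.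
  have hm : (i %% Q.+1 < Q.+1)%N by rewrite ltn_mod.
  have hmN : (i %% Q.+1 < N)%N := leq_trans hm HQN.
  have hN : (0 < N)%N by apply: leq_trans HN.
  split => //.
  - by rewrite (leq_trans _ (leq_mul hd (leqnn N))) // mulSnr ltn_add2l.
  - by rewrite divnMDl // (divn_small hmN) addn0.
  - by rewrite modnMDl (modn_small hmN).
have Yent : forall ro co, (ro < Q * N)%N -> (co < N)%N ->
   mget (kron S (1%:M : 'M[C]_N) *m Dmx P) ro co =
   if (ro %% N == co)%N then \sum_(q < Q) mget S (ro %/ N)%N q * mget P (ro %% N)%N q else 0.
  by move=> ro co h1 h2; rewrite (mget_ord _ h1 h2) kronSD.
have cvE : forall n m (e : n = m) (y : 'I_n), nat_of_ord (cast_ord e y) = y by [].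
have lsE : forall m n (y : 'I_m), nat_of_ord (@lshift m n y) = y by [].
have rsE : forall m n (y : 'I_n), nat_of_ord (@rshift m n y) = (m + y)%N by [].
have ur : ursubmx AA = 0.
  apply/matrixP => i j; rewrite !mxE AAE Aentry sigval !cvE lsE rsE.
  rewrite ltnNge -addnA leq_addr /= Jrm //.
  have [h1 h2 h3 h4 h5] := rmf i (ltn_ord i).
  have hj0 := ltn_ord j.
  have hj : ((Q + j).+1 < N)%N by rewrite -addSn -ltn_subRL.
  rewrite addKn Yent // h3 ifN //.
  by rewrite ltn_eqF // (leq_trans h5) // ltnS leq_addr.
have hQN : forall r, (r < N)%N -> (r < Q * N)%N.
  by move=> r hr; apply: leq_trans hr (leq_pmull _ HQ1).
have dr : drsubmx AA = diag_mx (\row_(j < N - Q.+1) \sum_(q < Q) mget S 0 q * mget P (j + Q.+1)%N q).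
  apply/matrixP => i j; rewrite !mxE AAE Aentry sigval !cvE !rsE.
  have hi0 := ltn_ord i; have hj0 := ltn_ord j.
  have hi : (i + Q.+1 < N)%N by rewrite addnC -ltn_subRL.
  have hj : ((Q + j).+1 < N)%N by rewrite -addSn -ltn_subRL.
  have -> : (Q * Q + Q + j < Q * Q)%N = false by rewrite ltnNge -addnA leq_addr.
  rewrite /sg.
  have -> : (Q * Q + Q + i < Q * Q + Q)%N = false by rewrite ltnNge leq_addr.
  rewrite addKn -addnA addKn /Jidx hi Yent ?hQN // (modn_small hi) (divn_small hi).
  have -> : (i + Q.+1 == (Q + j).+1)%N = (i == j) by rewrite addnS addnC eqSS eqn_add2l.
  by case: eqP => [e|ne] //=; rewrite e.
have XPm : forall a b, (a < N)%N -> (b < Q)%N -> mget (X *m P) a b = mget x a 0 * mget P a b.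
  move=> a b ha hb; rewrite (mget_ord _ ha hb) (mget_ord x ha (ltn0Sn 0)) (mget_ord P ha hb).
  by rewrite /X mul_diag_mx !mxE.
have ul : forall i j : 'I_(Q * Q + Q), ulsubmx AA i j =
  if (j < Q * Q)%N then ((i %/ Q.+1)%N == (j %/ Q)%N)%:R * (mget x (i %% Q.+1)%N 0 * mget P (i %% Q.+1)%N (j %% Q)%N)
  else (if (i %% Q.+1 == (j - Q * Q).+1)%N then \sum_(q < Q) mget S (i %/ Q.+1)%N q * mget P (i %% Q.+1)%N q else 0).
  move=> i j; rewrite !mxE AAE Aentry sigval !cvE !lsE Jrm //.
  have [h1 h2 h3 h4 h5] := rmf i (ltn_ord i).
  have h5N : (i %% Q.+1 < N)%N := leq_trans h5 HQN.
  case: ifP => hjq.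
    have hjd : (j %/ Q < Q)%N by rewrite ltn_divLR.
    have hjm : (j %% Q < Q)%N by rewrite ltn_mod.
    by rewrite mget_kron // h2 h3 (mget1 h4 hjd) XPm.
  have hjN : ((j - Q * Q).+1 < N)%N.
    move: hjq (ltn_ord j); move: (nat_of_ord j) => jj hjq hj0; tonat; lia.
  by rewrite Yent // h2 h3.
pose M2c := castmx (mulnSr Q Q, mulnSr Q Q) M2.
pose M1c := castmx (mulnSr Q Q, mulnSr Q Q) M1.
have Wf : M2c *m M3 *m M4 = castmx (mulnSr Q Q, erefl)
    (row_mx (kron (1%:M : 'M[C]_Q) Pt) (colsub (@shift1 Q.+1) (kron S (1%:M : 'M[C]_Q.+1) *m Dmx Pt))).
  rewrite /M2c /M3 castmx_mulmx castmx_mull; congr castmx.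
  rewrite mul_mx_row mul_row_block !mulmx0 addr0 add0r mulmx1 mulmx_colsub /M2 !kron_mul.
  by rewrite mulmx1 mul1mx mulmxV // mulmx1.
have M1cE : M1c = diag_mx (\row_(i < Q * Q + Q) mget x (i %% Q.+1)%N 0).
  apply/matrixP => i j; rewrite castmxE !mxE /=.
  have [_ _ _ h4i h5i] := rmf i (ltn_ord i).
  have [<-|ne] := eqVneq i j.
    by rewrite (mget1 h4i h4i) (mget_ord Xt h5i h5i) !mxE /= !eqxx mul1r.
  have [_ _ _ h4j h5j] := rmf j (ltn_ord j).
  rewrite (mget1 h4i h4j) (mget_ord Xt h5i h5j) !mxE /=.
  have -> : (Ordinal h5i == Ordinal h5j) = (i %% Q.+1 == j %% Q.+1)%N by [].
  rewrite mulr0n.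
  case hd: (i %/ Q.+1 == j %/ Q.+1)%N; case hm: (i %% Q.+1 == j %% Q.+1)%N; rewrite ?mul0r ?mulr0n ?mulr0 //.
  exfalso; move/negP: ne; apply; apply/eqP/val_inj.
  by rewrite /= (divn_eq i Q.+1) (divn_eq j Q.+1) (eqP hd) (eqP hm).
pose dd : 'rV[C]_(Q * Q + Q) := row_mx (const_mx 1) (\row_(c < Q) mget x c.+1 0).
pose M5' := diag_mx dd.
have Dunit : diag_mx (\row_(c < Q) mget x c.+1 0) \in unitmx.
  rewrite unitmxE det_diag unitfE; apply/prodf_neq0 => c _; rewrite mxE.
  have hc : (c.+1 < N)%N := leq_ltn_trans (ltn_ord c) HQN.
  by rewrite (mget_ord x hc (ltn0Sn 0)); apply: hx => /=; rewrite ltn_ord.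
have M5'M5 : M5' *m M5 = 1%:M.
  rewrite /M5' /dd diag_mx_row /M5 mulmx_block !mulmx0 !mul0mx !addr0 !add0r diag_const_mx mulmx1 mulmxV //.
  by rewrite -scalar_mx_block.
have Beq : ulsubmx AA *m M5' = M1c *m (M2c *m M3 *m M4).
  rewrite Wf M1cE mul_mx_diag mul_diag_mx; apply/matrixP => i j; rewrite mxE ul [RHS]mxE castmxE /=.
  have [_ _ _ h4i h5i] := rmf i (ltn_ord i).
  rewrite !mxE cast_ord_id; case: splitP => [c hc|c hc].
    rewrite !mxE hc mget_rowsel // cvE (mget1 h4i); last by rewrite ltn_divLR.
    by rewrite mulr1 mulrCA.
  rewrite hc addKn [in LHS]mxE [in RHS]mxE kronSD cvE.
  have -> : nat_of_ord (@shift1 Q.+1 c) = c.+1 by [].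
  case: eqP => [e|ne]; last by rewrite mul0r mulr0.
  have hc1 : (c.+1 < Q.+1)%N by rewrite ltnS ltn_ord.
  rewrite e mulrC; congr (_ * _); apply: eq_bigr => q _.
  by rewrite mget_rowsel.
have Bfin : ulsubmx AA = M1c *m M2c *m M3 *m M4 *m M5.
  by rewrite -[ulsubmx AA]mulmx1 -M5'M5 mulmxA Beq !mulmxA.
rewrite detA -(@det_castmx _ _ _ eN (row_perm s A)) -/AA -[AA]submxK ur dr det_lblock det_diag Bfin.
rewrite !det_mulmx /M1c /M2c !det_castmx !normrM normr_prod mulrC; congr (_ * _).
rewrite [RHS](big_addn 0 N Q.+1) big_mkord; apply: eq_bigr => i _.
by rewrite mxE.
Qed.
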